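(* Let $X=\{x_0,x_1,\ldots,x_m\}$ and let $\mathbb{R}^m_{pi}\langle\langle X\rangle\rangle$ be the set of purely improper series in $\mathbb{R}^m\langle\langle X\rangle\rangle$. Then the set $\delta\sqcup\!\sqcup\,\mathbb{R}^m_{pi}\langle\langle X\rangle\rangle=\{\delta_d : d\in \mathbb{R}^m_{pi}\langle\langle X\rangle\rangle\}$ forms a group under the multiplicative composition product $\delta_c\circ\delta_d:=\delta_{d\,\sqcup\!\sqcup\,(c\,\tilde\circ\,\delta_d)}$, with identity element $\delta_{\mathbb{1}}$, where $\mathbb{1}=[1\,1\cdots 1]^t\in\mathbb{R}^m$.
   Context: $X$ is a finite alphabet of noncommuting letters, $X^\ast$ the free monoid of words (with empty word $\emptyset$), and $\mathbb{R}^\ell\langle\langle X\rangle\rangle$ the set of formal power series $c=\sum_{\eta\in X^\ast}(c,\eta)\eta$ with coefficients $(c,\eta)\in\mathbb{R}^\ell$; $c_i$ denotes the $i$-th component series. A series is proper if $(c,\emptyset)=0$; $c\in\mathbb{R}^\ell\langle\langle X\rangle\rangle$ is purely improper if $(c_i,\emptyset)\neq 0$ for every $i=1,\ldots,\ell$. All products of vector-valued series are taken componentwise. The shuffle product is the bilinear product on words defined by $(x_i\eta)\sqcup\!\sqcup(x_j\xi)=x_i(\eta\sqcup\!\sqcup x_j\xi)+x_j(x_i\eta\sqcup\!\sqcup\xi)$, $\eta\sqcup\!\sqcup\emptyset=\emptyset\sqcup\!\sqcup\eta=\eta$, extended to series. The multiplicative mixed composition product of $c\in\mathbb{R}^p\langle\langle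 X\rangle\rangle$ and $d\in\mathbb{R}^m\langle\langle X\rangle\rangle$ is $c\,\tilde\circ\,\delta_d=\sum_{\eta\in X^\ast}(c,\eta)\,\bar\phi_d(\eta)(\mathbf{1})$, where $\mathbf{1}=1\emptyset$ and $\bar\phi_d$ is the algebra homomorphism from words (under concatenation) to linear endomorphisms of $\mathbb{R}\langle\langle X\rangle\rangle$ (under composition) determined by $\bar\phi_d(x_0)(e)=x_0e$ and $\bar\phi_d(x_i)(e)=x_i(d_i\sqcup\!\sqcup e)$ for $i=1,\ldots,m$, with $\bar\phi_d(\emptyset)$ the identity. For $d\in\mathbb{R}^m\langle\langle X\rangle\rangle$, $\delta_d$ is a formal symbol (standing for $\delta\sqcup\!\sqcup d$, the generating series of the operator $u\mapsto u\cdot F_d[u]$, $F_d$ the Chen-Fliess series of $d$); $\delta_c=\delta_d$ iff $c=d$. *)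

(* Defs.v *)
From HB Require Import structures.
From mathcomp Require Import all_boot all_order all_algebra.
From mathcomp Require Import reals.
Set Implicit Arguments. Unset Strict Implicit. Unset Printing Implicit Defensive.
Import Order.TTheory GRing.Theory Num.Theory.
Local Open Scope ring_scope.

(* Alphabet X = {x_0, x_1, ..., x_m} is 'I_m.+1 : letter ord0 is x_0, and
   letter (lift ord0 i) for i : 'I_m is x_{i+1}, paired with component i of a
   vector series in R^m<<X>>. *)
Definition word (m : nat) := seq 'I_m.+1.

Definition series (R : realType) (m : nat) := word m -> R.
Definition vseries (R : realType) (l m : nat) := 'I_l -> series R m.

Section Series.
Variables (R : realType) (m : nat).

Definition one_ser : series R m := fun w => if w is [::] then 1 else 0.

(* This is the
   bilinear extension of the recursive shuffle on words. *)
Definition shuffle (c d : series R m) : series R m :=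
  fun w => \sum_(b : (size w).-tuple bool)
             c (mask (tval b) w) * d (mask (map negb (tval b)) w).

Definition prepend (a : 'I_m.+1) (e : series R m) : series R m :=
  fun w => match w with
           | a' :: w' => if a' == a then e w' else 0
           | [::] => 0
           end.

Definition phi_letter (d : vseries R m m) (a : 'I_m.+1) (e : series R m)
  : series R m :=
  match unlift ord0 a with
  | None => prepend a e
  | Some i => prepend a (shuffle (d i) e)
  end.

Definition phi_word (d : vseries R m m) (eta : word m) (e : series R m)
  : series R m := foldr (phi_letter d) e eta.

(* Since phibar_d(eta)(1) only has words of
   length >= |eta| in its support, the coefficient at w of the (formally
   infinite) sum over eta only involves words eta with |eta| <= |w|. *)
Definition mixcomp (p : nat) (c : vseries R p m) (d : vseries R m m)
  : vseries R p m :=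
  fun i w => \sum_(k < (size w).+1) \sum_(t : k.-tuple 'I_m.+1)
               c i (tval t) * phi_word d (tval t) one_ser w.

Definition purely_improper (l : nat) (c : vseries R l m) : Prop :=
  forall i : 'I_l, c i [::] <> 0.

(* formal symbols delta_d; Delta is injective, so delta_c = delta_d iff c = d *)
Variant delta_ser := Delta of vseries R m m.

Definition dcomp (x y : delta_ser) : delta_ser :=
  let: Delta c := x in let: Delta d := y in
  Delta (fun i => shuffle (d i) (mixcomp c d i)).

Definition one_vec : vseries R m m := fun _ => one_ser.

Definition delta_pi : delta_ser -> Prop :=
  fun x => exists d, purely_improper d /\ x = Delta d.

End Series.

(* Main.v *)
Require Import Defs.
From HB Require Import structures.
From mathcomp Require Import all_boot all_order all_algebra.
From mathcomp Require Import reals.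
From Stdlib Require Import FunctionalExtensionality.
Set Implicit Arguments. Unset Strict Implicit. Unset Printing Implicit Defensive.
Import Order.TTheory GRing.Theory Num.Theory.
Local Open Scope ring_scope.

Lemma sum_tupleS (R : realType) (T : finType) n (F : n.+1.-tuple T -> R) :
  \sum_(t : n.+1.-tuple T) F t = \sum_(x : T) \sum_(t : n.-tuple T) F [tuple of x :: t].
Proof.
rewrite pair_big /=.
rewrite (reindex (fun p : T * n.-tuple T => [tuple of p.1 :: p.2])) //=.
exists (fun t : n.+1.-tuple T => (thead t, [tuple of behead t])).
  by move=> [x t] _ /=; congr pair; apply: val_inj.
by move=> t _; rewrite [RHS]tuple_eta.
Qed.

Lemma sum_tuple0 (R : realType) (T : finType) (F : 0.-tuple T -> R) :
  \sum_(t : 0.-tuple T) F t = F [tuple].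
Proof. by rewrite (big_pred1 [tuple]) // => t; rewrite /= (tuple0 t) ; apply/esym/eqP. Qed.

Section S.
Variables (R : realType) (m : nat).
Notation series := (series R m).
Notation word := (word m).

Definition deriv (a : 'I_m.+1) (f : series) : series := fun w => f (a :: w).
Definition sadd (f g : series) : series := fun w => f w + g w.
Definition szero : series := fun _ => 0.

Lemma shuffle_nil (c d : series) : shuffle c d [::] = c [::] * d [::].
Proof. by rewrite /shuffle sum_tuple0. Qed.

Lemma shuffle_cons (c d : series) a w :
  shuffle c d (a :: w) = shuffle (deriv a c) d w + shuffle c (deriv a d) w.
Proof.
rewrite /shuffle /= sum_tupleS big_bool /= addrC; congr (_ + _).
Qed.


Lemma deriv_shuffle (c d : series) a :
  deriv a (shuffle c d) = sadd (shuffle (deriv a c) d) (shuffle c (deriv a d)).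
Proof. by apply: functional_extensionality => w; rewrite /deriv shuffle_cons. Qed.

Lemma shuffle_addl (c c' d : series) w :
  shuffle (sadd c c') d w = shuffle c d w + shuffle c' d w.
Proof. by rewrite /shuffle -big_split; apply: eq_bigr => b _; rewrite /sadd mulrDl. Qed.

Lemma shuffle_addr (c d d' : series) w :
  shuffle c (sadd d d') w = shuffle c d w + shuffle c d' w.
Proof. by rewrite /shuffle -big_split; apply: eq_bigr => b _; rewrite /sadd mulrDr. Qed.

Lemma shuffle0l (d : series) w : shuffle szero d w = 0.
Proof. by rewrite /shuffle big1 // => b _; rewrite /szero mul0r. Qed.

Lemma shuffle0r (d : series) w : shuffle d szero w = 0.
Proof. by rewrite /shuffle big1 // => b _; rewrite /szero mulr0. Qed.

Lemma shuffleC (c d : series) w : shuffle c d w = shuffle d c w.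
Proof.
elim: w c d => [|a w IH] c d; first by rewrite !shuffle_nil mulrC.
by rewrite !shuffle_cons addrC; congr (_ + _); apply: IH.
Qed.

Lemma deriv_one a : deriv a (@one_ser R m) = szero.
Proof. by []. Qed.

Lemma shuffle1l (d : series) w : shuffle (@one_ser R m) d w = d w.
Proof.
elim: w d => [|a w IH] d; first by rewrite shuffle_nil mul1r.
by rewrite shuffle_cons deriv_one shuffle0l add0r IH.
Qed.

Lemma shuffle1r (d : series) w : shuffle d (@one_ser R m) w = d w.
Proof. by rewrite shuffleC shuffle1l. Qed.

Lemma shuffleA (c d e : series) w :
  shuffle (shuffle c d) e w = shuffle c (shuffle d e) w.
Proof.
elim: w c d e => [|a w IH] c d e; first by rewrite !shuffle_nil mulrA.
rewrite !shuffle_cons !deriv_shuffle shuffle_addl shuffle_addr !IH.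
by rewrite addrA.
Qed.

Lemma shuffle_ext (c c' d d' : series) (w : word) :
  (forall u : word, (size u <= size w)%N -> c u = c' u) ->
  (forall u : word, (size u <= size w)%N -> d u = d' u) ->
  shuffle c d w = shuffle c' d' w.
Proof.
elim: w c c' d d' => [|a w IH] c c' d d' Hc Hd.
  by rewrite !shuffle_nil Hc // Hd.
rewrite !shuffle_cons; congr (_ + _); apply: IH => u Hu;
  rewrite /deriv ?Hc ?Hd //= ?ltnS //; exact: leq_trans Hu _.
Qed.


Lemma sum_ord_nat (n : nat) (F : nat -> R) : \sum_(k < n) F k = \sum_(0 <= k < n) F k.
Proof. by rewrite big_mkord. Qed.

Lemma sum_widen (F : nat -> R) n N : (n <= N)%N -> (forall k, (n <= k)%N -> F k = 0) ->
  \sum_(k < N) F k = \sum_(k < n) F k.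
Proof.
move=> HN HF; rewrite !sum_ord_nat (big_cat_nat (leq0n n) HN) /=.
rewrite [X in _ + X]big1_seq ?addr0 // => k /andP [_].
by rewrite mem_index_iota => /andP[Hk _]; exact: HF.
Qed.

Variable d : vseries R m m.

Definition P (t : word) : series := phi_word d t (@one_ser R m).
Definition mcN (N : nat) (c : series) : series :=
  fun w => \sum_(k < N) \sum_(t : k.-tuple 'I_m.+1) c t * P t w.
Definition mc (c : series) : series := fun w => mcN (size w).+1 c w.

Lemma mixcompE p (c : vseries R p m) i : mixcomp c d i = mc (c i).
Proof. by []. Qed.

Definition ylet (a : 'I_m.+1) (f : series) : series :=
  match unlift ord0 a with Some i => shuffle (d i) f | None => f end.

Lemma phi_letter_self a f w : phi_letter d a f (a :: w) = ylet a f w.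
Proof. by rewrite /phi_letter /ylet; case: (unlift ord0 a) => [i|] /=; rewrite eqxx. Qed.

Lemma phi_letter_other a b f w : b != a -> phi_letter d b f (a :: w) = 0.
Proof.
by move=> Hba; rewrite /phi_letter; case: (unlift ord0 b) => [i|] /=;
  rewrite eq_sym (negbTE Hba).
Qed.

Lemma phi_letter_nil b f : phi_letter d b f [::] = 0.
Proof. by rewrite /phi_letter; case: (unlift ord0 b). Qed.

Lemma P_low (t v : word) : (size v < size t)%N -> P t v = 0.
Proof.
elim: t v => [|b t IH] [|a v] //= H.
  by rewrite /P /= phi_letter_nil.
rewrite /P /=; have [->|Hba] := eqVneq b a; last by rewrite phi_letter_other.
rewrite phi_letter_self /ylet; case: (unlift ord0 a) => [i|]; last exact: IH.
rewrite (shuffle_ext (c:=d i) (c':=d i) (d':=szero)) ?shuffle0r // => u Hu.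
by apply: IH; apply: leq_ltn_trans Hu H.
Qed.

Lemma mcN_mc N c (w : word) : (size w < N)%N -> mcN N c w = mc c w.
Proof.
move=> H; rewrite /mc /mcN.
apply: (sum_widen (F := fun k => \sum_(t : k.-tuple 'I_m.+1) c t * P t w)) => // k Hk.
by rewrite big1 // => t _; rewrite P_low ?mulr0 // size_tuple.
Qed.

Lemma mc_nil c : mc c [::] = c [::].
Proof. by rewrite /mc /mcN big_ord1 sum_tuple0 /P /= /one_ser mulr1. Qed.

Lemma mc_cons_gen c a (w : word) :
  mc c (a :: w) = \sum_(k < (size w).+1) \sum_(t : k.-tuple 'I_m.+1) c (a :: t) * ylet a (P t) w.
Proof.
rewrite /mc /mcN /=.
rewrite (sum_ord_nat _ (fun k => \sum_(t : k.-tuple 'I_m.+1) c t * P t (a :: w))).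
rewrite big_nat_recl // sum_tuple0 /P /= /one_ser mulr0 add0r.
rewrite (sum_ord_nat _ (fun k => \sum_(t : k.-tuple 'I_m.+1) c (a :: t) * ylet a (P t) w)).
apply: eq_bigr => k _; rewrite sum_tupleS /=.
rewrite exchange_big /=; apply: eq_bigr => t _.
rewrite (bigD1 a) //= big1 ?addr0; first by rewrite phi_letter_self.
by move=> b Hb; rewrite phi_letter_other ?mulr0.
Qed.


Lemma shuffle_mcN g N c (w : word) :
  shuffle g (mcN N c) w = \sum_(k < N) \sum_(t : k.-tuple 'I_m.+1) c t * shuffle g (P t) w.
Proof.
rewrite /shuffle /mcN.
under eq_bigr => b _ do rewrite mulr_sumr.
rewrite exchange_big; apply: eq_bigr => k _.
under eq_bigr => b _ do rewrite mulr_sumr.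
rewrite exchange_big; apply: eq_bigr => t _; rewrite mulr_sumr.
by apply: eq_bigr => b _; rewrite mulrCA.
Qed.

Lemma mc_cons_none c a (w : word) : unlift ord0 a = None ->
  mc c (a :: w) = mc (deriv a c) w.
Proof. by move=> E; rewrite mc_cons_gen /ylet E. Qed.

Lemma mc_cons_some c a i (w : word) : unlift ord0 a = Some i ->
  mc c (a :: w) = shuffle (d i) (mc (deriv a c)) w.
Proof.
move=> E; rewrite mc_cons_gen /ylet E.
rewrite (shuffle_ext (c:=d i) (c':=d i) (d := mc (deriv a c)) (d' := mcN (size w).+1 (deriv a c))) //;
  last by move=> u Hu; rewrite mcN_mc.
by rewrite shuffle_mcN.
Qed.

Lemma deriv_mc_none c a : unlift ord0 a = None -> deriv a (mc c) = mc (deriv a c).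
Proof. by move=> E; apply: functional_extensionality => w; rewrite /deriv mc_cons_none. Qed.

Lemma deriv_mc_some c a i : unlift ord0 a = Some i ->
  deriv a (mc c) = shuffle (d i) (mc (deriv a c)).
Proof. by move=> E; apply: functional_extensionality => w; rewrite /deriv (mc_cons_some _ _ E). Qed.

Lemma mc_add c c' (w : word) : mc (sadd c c') w = mc c w + mc c' w.
Proof.
rewrite /mc /mcN -big_split; apply: eq_bigr => k _.
by rewrite -big_split; apply: eq_bigr => t _; rewrite /sadd mulrDl.
Qed.

Lemma mc_zero (w : word) : mc szero w = 0.
Proof. by rewrite /mc /mcN big1 // => k _; rewrite big1 // => t _; rewrite /szero mul0r. Qed.

Lemma shuffleCf (c c' : series) : shuffle c c' = shuffle c' c.
Proof. by apply: functional_extensionality => w; apply: shuffleC. Qed.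

Lemma shuffleAf (c c' c'' : series) : shuffle (shuffle c c') c'' = shuffle c (shuffle c' c'').
Proof. by apply: functional_extensionality => w; apply: shuffleA. Qed.

Lemma mc_shuffle_n n (w : word) : (size w <= n)%N -> forall c c',
  mc (shuffle c c') w = shuffle (mc c) (mc c') w.
Proof.
elim: n w => [|n IH] [|a w] //= Hw c c'; try by rewrite mc_nil !shuffle_nil !mc_nil.
case E: (unlift ord0 a) => [i|].
  rewrite (mc_cons_some _ _ E) deriv_shuffle shuffle_cons !(deriv_mc_some _ E).
  rewrite (shuffle_ext (c:=d i) (c':=d i) (d' := sadd (shuffle (mc (deriv a c)) (mc c'))
             (shuffle (mc c) (mc (deriv a c'))))) //; last first.
    by move=> u Hu; rewrite mc_add !IH //; apply: leq_trans Hu Hw.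
  rewrite shuffle_addr shuffleA; congr (_ + _).
  by rewrite -shuffleA (shuffleCf (d i)) shuffleA.
rewrite (mc_cons_none _ _ E) deriv_shuffle shuffle_cons !(deriv_mc_none _ E).
by rewrite mc_add !IH.
Qed.

Lemma mc_shuffle c c' (w : word) : mc (shuffle c c') w = shuffle (mc c) (mc c') w.
Proof. exact: (@mc_shuffle_n (size w)). Qed.

Lemma mc_one_l (w : word) : mc (@one_ser R m) w = @one_ser R m w.
Proof.
case: w => [|a w]; first by rewrite mc_nil.
case E: (unlift ord0 a) => [i|].
  rewrite (mc_cons_some _ _ E) deriv_one.
  have -> : mc szero = szero by apply: functional_extensionality => u; rewrite mc_zero.
  by rewrite shuffle0r.
by rewrite (mc_cons_none _ _ E) deriv_one mc_zero.
Qed.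

End S.

Definition comp (R : realType) m (d e : vseries R m m) : vseries R m m :=
  fun i => shuffle (e i) (mc e (d i)).

Lemma mc_one_r (R : realType) m (c : series R m) (w : word m) :
  mc (@one_vec R m) c w = c w.
Proof.
elim: w c => [|a w IH] c; first by rewrite mc_nil.
case E: (unlift ord0 a) => [i|].
  by rewrite (mc_cons_some _ _ _ E) /one_vec shuffle1l IH.
by rewrite (mc_cons_none _ _ _ E) IH.
Qed.

Lemma mc_comp_n (R : realType) m (d e : vseries R m m) n (w : word m) :
  (size w <= n)%N -> forall c, mc e (mc d c) w = mc (comp d e) c w.
Proof.
elim: n w => [|n IH] [|a w] //= Hw c; try by rewrite !mc_nil.
case E: (unlift ord0 a) => [i|].
  rewrite (mc_cons_some _ _ _ E) (deriv_mc_some _ _ E) (mc_cons_some _ _ _ E).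
  rewrite (shuffle_ext (c:=e i) (c':=e i)
     (d' := shuffle (mc e (d i)) (mc (comp d e) (deriv a c)))) //; last first.
    move=> u Hu; rewrite mc_shuffle; apply: shuffle_ext => // v Hv.
    by apply: IH; apply: leq_trans Hv (leq_trans Hu Hw).
  by rewrite /comp shuffleAf.
by rewrite (mc_cons_none _ _ _ E) (deriv_mc_none _ _ E) (mc_cons_none _ _ _ E) IH.
Qed.

Lemma mc_comp (R : realType) m (d e : vseries R m m) c (w : word m) :
  mc e (mc d c) w = mc (comp d e) c w.
Proof. exact: (@mc_comp_n _ _ _ _ (size w)). Qed.

Section Inv.
Variables (R : realType) (m : nat) (d : vseries R m m).
Notation series := (series R m).
Notation word := (word m).

Definition coef (a : 'I_m.+1) : R :=
  match unlift ord0 a with Some i => d i [::] | None => 1 end.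
Definition diag (t : word) : R := \prod_(a <- t) coef a.

Lemma shuffle_vanish (g f : series) (w : word) :
  (forall u : word, (size u <= size w)%N -> f u = 0) -> shuffle g f w = 0.
Proof.
move=> H; rewrite (shuffle_ext (c' := g) (d' := @szero R m)) ?shuffle0r //.
Qed.

Lemma shuffle_low (g f : series) (w : word) :
  (forall u : word, (size u < size w)%N -> f u = 0) -> shuffle g f w = g [::] * f w.
Proof.
elim: w g f => [|a w IH] g f H; first by rewrite shuffle_nil.
rewrite shuffle_cons shuffle_vanish ?add0r; last by move=> u Hu; apply: H.
by rewrite IH // => u Hu; apply: H.
Qed.

Lemma P_diag (t v : word) : size v = size t -> P d t v = (t == v)%:R * diag t.
Proof.
elim: t v => [|b t IH] [|a v] //= H.
  by rewrite /P /= /diag big_nil mulr1.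
rewrite /P /=; have [->|Hba] := eqVneq b a; last first.
  by rewrite phi_letter_other // eqseq_cons (negbTE Hba) mul0r.
rewrite phi_letter_self /ylet eqseq_cons eqxx /= /diag big_cons /coef.
case: (unlift ord0 a) => [i|].
  rewrite shuffle_low; last by move=> u Hu; apply: P_low; case: H => <-.
  by rewrite -/(P d t v) IH; [rewrite -/(diag t) mulrCA | case: H].
by rewrite -/(P d t v) mul1r IH //; case: H.
Qed.

Lemma mc_split c (w : word) : mc d c w = mcN d (size w) c w + c w * diag w.
Proof.
rewrite /mc /mcN big_ord_recr /=; congr (_ + _).
rewrite (bigD1 (in_tuple w)) //= big1 ?addr0.
  by rewrite P_diag ?size_tuple // eqxx mul1r.
move=> t Ht; rewrite P_diag ?size_tuple //.
have -> : (tval t == w) = false by apply/negbTE.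
by rewrite mul0r mulr0.
Qed.

Lemma mcN_local N c c' (w : word) : (forall v : word, (size v < N)%N -> c v = c' v) ->
  mcN d N c w = mcN d N c' w.
Proof.
move=> H; apply: eq_bigr => k _; apply: eq_bigr => t _.
by rewrite H // size_tuple.
Qed.

Lemma diag_neq0 (t : word) : purely_improper d -> diag t != 0.
Proof.
move=> Hd; rewrite /diag; elim: t => [|a t IH]; first by rewrite big_nil oner_neq0.
rewrite big_cons mulf_neq0 // /coef; case: (unlift ord0 a) => [i|]; last exact: oner_neq0.
by apply/eqP.
Qed.

Lemma L_local (dd : series) c c' (w : word) :
  (forall v : word, (size v < size w)%N -> c v = c' v) ->
  shuffle dd (mc d c) w - dd [::] * diag w * c w =
  shuffle dd (mc d c') w - dd [::] * diag w * c' w.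
Proof.
move=> H.
have dec : forall c0, shuffle dd (mc d c0) w - dd [::] * diag w * c0 w =
   shuffle dd (fun u => if (size u < size w)%N then mc d c0 u else 0) w
   + dd [::] * mcN d (size w) c0 w.
  move=> c0.
  set A := fun u => if (size u < size w)%N then mc d c0 u else 0.
  set B := fun u => if (size u < size w)%N then 0 else mc d c0 u.
  have HB : mc d c0 = sadd A B.
    by apply: functional_extensionality => u; rewrite /sadd /A /B; case: ifP; rewrite ?addr0 ?add0r.
  rewrite {1}HB shuffle_addr [shuffle dd B w]shuffle_low; last by move=> u Hu; rewrite /B Hu.
  rewrite /B ltnn mc_split mulrDr addrA [c0 w * diag w]mulrC mulrA addrK //.
rewrite !dec; congr (_ + _); last by rewrite (mcN_local _ H).
congr shuffle; apply: functional_extensionality => u; case: ifP => // Hu.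
rewrite /mc; apply: mcN_local => v Hv; apply: H; exact: leq_trans Hv Hu.
Qed.

End Inv.

Section Solve.
Variables (R : realType) (m : nat).
Variables (L : series R m -> series R m) (D : word m -> R) (g : series R m).

Fixpoint Fs (n : nat) : series R m :=
  match n with
  | 0 => fun _ => 0
  | n.+1 => fun w => if (size w < n)%N then Fs n w
                     else (g w - (L (Fs n) w - D w * Fs n w)) / D w
  end.

Definition sol : series R m := fun w => Fs (size w).+1 w.

Lemma Fs_stab n (v : word m) : (size v < n)%N -> Fs n v = sol v.
Proof.
elim: n => [|n IH] // H.
have [Hv|Hv] := ltnP (size v) n; first by rewrite /= Hv; exact: IH.
have Hn : size v = n by apply/eqP; rewrite eqn_leq -ltnS H Hv.
by rewrite /sol Hn.
Qed.

Lemma sol_spec : (forall w, D w != 0) ->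
  (forall c c' (w : word m), (forall v : word m, (size v < size w)%N -> c v = c' v) ->
     L c w - D w * c w = L c' w - D w * c' w) ->
  forall w, L sol w = g w.
Proof.
move=> HD Hloc w.
have E := Hloc sol (Fs (size w)) w (fun v Hv => esym (Fs_stab Hv)).
have Hc : sol w = (g w - (L (Fs (size w)) w - D w * Fs (size w) w)) / D w.
  by rewrite /sol /= ltnn.
have : D w * sol w = g w - (L sol w - D w * sol w).
  by rewrite E Hc mulrC divfK.
by move/eqP; rewrite eq_sym subr_eq => /eqP ->; rewrite addrC subrK.
Qed.

End Solve.

Lemma mc_shufflef (R : realType) m (d : vseries R m m) c c' :
  mc d (shuffle c c') = shuffle (mc d c) (mc d c').
Proof. by apply: functional_extensionality => w; apply: mc_shuffle. Qed.

Lemma mc_compf (R : realType) m (d e : vseries R m m) c :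
  mc e (mc d c) = mc (comp d e) c.
Proof. by apply: functional_extensionality => w; apply: mc_comp. Qed.

Theorem theorem8 (R : realType) (m : nat) :
  let G := @delta_pi R m in
  let e := Delta (@one_vec R m) in
  [/\ (* closure *)
      (forall x y, G x -> G y -> G (dcomp x y)),
      (* associativity *)
      (forall x y z, G x -> G y -> G z ->
         dcomp (dcomp x y) z = dcomp x (dcomp y z)),
      (* identity delta_1 *)
      G e /\ (forall x, G x -> dcomp e x = x /\ dcomp x e = x) &
      (* inverses *)
      (forall x, G x -> exists y, G y /\ dcomp x y = e /\ dcomp y x = e)].
Proof.
move=> G e.
have closure : forall x y, G x -> G y -> G (dcomp x y).
  move=> _ _ [c [Hc ->]] [d [Hd ->]].
  exists (fun i => shuffle (d i) (mixcomp c d i)); split => // i.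
  rewrite shuffle_nil mixcompE mc_nil; apply/eqP; rewrite mulf_neq0 //; exact/eqP.
have assoc : forall x y z, G x -> G y -> G z ->
         dcomp (dcomp x y) z = dcomp x (dcomp y z).
  move=> _ _ _ [c [Hc ->]] [d [Hd ->]] [f [Hf ->]] /=.
  congr Delta; apply: functional_extensionality => i.
  rewrite !mixcompE mc_shufflef mc_compf.
  by rewrite -shuffleAf.
have Ge : G e.
  exists (@one_vec R m); split => // i; exact/eqP/oner_neq0.
have ident : forall x, G x -> dcomp e x = x /\ dcomp x e = x.
  move=> _ [d [Hd ->]]; split => /=; congr Delta;
    apply: functional_extensionality => i; apply: functional_extensionality => w.
    by rewrite mixcompE /one_vec (_ : mc d (@one_ser R m) = @one_ser R m) ?shuffle1r //;
      apply: functional_extensionality => u; rewrite mc_one_l.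
  by rewrite mixcompE /one_vec shuffle1l mc_one_r.
have linv : forall x, G x -> exists y, G y /\ dcomp y x = e.
  move=> _ [d [Hd ->]].
  pose L j := fun c : series R m => shuffle (d j) (mc d c).
  pose D j := fun w : word m => d j [::] * diag d w.
  have HD : forall j w, D j w != 0.
    by move=> j w; rewrite mulf_neq0 ?diag_neq0 //; exact/eqP.
  have Hs : forall j w, L j (sol (L j) (D j) (@one_ser R m)) w = @one_ser R m w.
    move=> j; apply: sol_spec => // c c' w H.
    by rewrite /L /D (@L_local R m d (d j) c c' w H).
  exists (Delta (fun j => sol (L j) (D j) (@one_ser R m))); split.
    exists (fun j => sol (L j) (D j) (@one_ser R m)); split => // j Hj.
    have := Hs j [::]; rewrite /L shuffle_nil mc_nil Hj mulr0 /one_ser => /eqP.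
    by rewrite eq_sym oner_eq0.
  rewrite /e /=; congr Delta; apply: functional_extensionality => j.
  apply: functional_extensionality => w; exact: Hs.
split => //.
move=> x Gx; have [y [Gy Hyx]] := linv x Gx.
have [z [Gz Hzy]] := linv y Gy.
have Hxz : x = z.
  have [Hex _] := ident x Gx.
  have [_ Hze] := ident z Gz.
  by rewrite -Hex -Hzy assoc // Hyx Hze.
by exists y; split => //; split => //; rewrite {1}Hxz.
Qed.
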